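(* Let $G$ be a group endowed with a topology (no compatibility between the group structure and the topology is assumed). Suppose there exists an integer $c>0$ such that every solvable subgroup of $G$ has derived length at most $c$. Then every solvable (resp. connected solvable) subgroup of $G$ is contained in a maximal solvable (resp. maximal connected solvable) subgroup of $G$.
   Context: Derived length of a solvable group $H$: the least $k$ with $D^k(H)=\{1\}$, where $D^0(H)=H$ and $D^{k}(H)$ is the commutator subgroup of $D^{k-1}(H)$. A subgroup is connected if it is connected for the induced topology. *)

(* Defs.v *)
From HB Require Import structures.
From mathcomp Require Import all_boot all_order.
From mathcomp Require Import boolp classical_sets topology.
Set Implicit Arguments. Unset Strict Implicit. Unset Printing Implicit Defensive.
Local Open Scope classical_set_scope.

Record is_group_law (T : Type) (mul : T -> T -> T) (one : T) (inv : T -> T) : Prop := {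
  gmulA : forall x y z, mul x (mul y z) = mul (mul x y) z;
  gmul1 : forall x, mul one x = x;
  gmulV : forall x, mul (inv x) x = one }.

Section GroupDefs.
Variables (T : Type) (mul : T -> T -> T) (one : T) (inv : T -> T).

Definition is_subgroup (H : set T) : Prop :=
  H one /\ (forall x y, H x -> H y -> H (mul x y)) /\ (forall x, H x -> H (inv x)).

Definition gen_subgroup (S : set T) : set T :=
  fun x => forall K, is_subgroup K -> S `<=` K -> K x.

Definition commg (x y : T) : T := mul (mul (inv x) (inv y)) (mul x y).

Definition derived_subgroup (H : set T) : set T :=
  gen_subgroup [set commg x y | x in H & y in H].

Fixpoint derived_series (k : nat) (H : set T) : set T :=
  match k with
  | 0 => H
  | k'.+1 => derived_subgroup (derived_series k' H)
  end.

Definition solvable_sg (H : set T) : Prop :=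
  exists k, derived_series k H = [set one].

Definition derived_length_le (H : set T) (c : nat) : Prop :=
  exists k, (k <= c)%N /\ derived_series k H = [set one].

Definition maximal_solvable (M : set T) : Prop :=
  is_subgroup M /\ solvable_sg M /\
  forall K, is_subgroup K -> solvable_sg K -> M `<=` K -> K = M.

End GroupDefs.

Section TopDefs.
Variables (T : topologicalType) (mul : T -> T -> T) (one : T) (inv : T -> T).

Definition maximal_connected_solvable (M : set T) : Prop :=
  is_subgroup mul one inv M /\ solvable_sg mul one inv M /\ connected M /\
  forall K, is_subgroup mul one inv K -> solvable_sg mul one inv K ->
    connected K -> M `<=` K -> K = M.
End TopDefs.

(* Main.v *)
Require Import Defs.
From mathcomp Require Import all_boot all_order.
From mathcomp Require Import boolp classical_sets topology.
Local Open Scope classical_set_scope.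

Section G.
Set Implicit Arguments. Unset Strict Implicit. Unset Printing Implicit Defensive.
Variables (T : Type) (mul : T -> T -> T) (one : T) (inv : T -> T).
Hypothesis hG : is_group_law mul one inv.
Local Notation sg := (is_subgroup mul one inv).
Local Notation gen := (gen_subgroup mul one inv).
Local Notation ds := (derived_series mul one inv).

Lemma mulV x : mul x (inv x) = one.
Proof.
case: hG => A L V.
have e : mul x (inv x) = mul (mul (inv (inv x)) (inv x)) (mul x (inv x)) by rewrite V L.
rewrite e -A (A (inv x)) V L; exact: V.
Qed.

Lemma mul1r x : mul x one = x.
Proof. case: hG => A L V. by rewrite -(V x) A mulV L. Qed.

Lemma inv1 : inv one = one.
Proof. case: hG => A L V. by rewrite -[inv one]mul1r V. Qed.

Lemma sg_one H : sg H -> H one.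
Proof. by case. Qed.

Lemma gen_sg S : sg (gen S).
Proof.
split; first by move=> K [] .
split; first by move=> x y hx hy K hK hS; have := hK => -[_ [hm _]]; apply: hm; [apply: hx|apply: hy].
by move=> x hx K hK hS; have := hK => -[_ [_ hi]]; apply: hi; apply: hx.
Qed.

Lemma gen_min S K : sg K -> S `<=` K -> gen S `<=` K.
Proof. by move=> hK hS x hx; apply: hx. Qed.

Lemma sub_gen S : S `<=` gen S.
Proof. by move=> x hx K _ hS; apply: hS. Qed.

Lemma ds_sg k H : sg H -> sg (ds k H).
Proof. by case: k => [|k] //= _; apply: gen_sg. Qed.

Lemma ds_mono k H H' : H `<=` H' -> ds k H `<=` ds k H'.
Proof.
elim: k => [|k IH] //= hH.
apply: gen_min; first exact: gen_sg.
move=> _ [x hx [y hy <-]]; apply: sub_gen; exists x; first exact: IH.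
by exists y; first exact: IH.
Qed.

Lemma sg_triv : sg [set one].
Proof.
case: hG => A L V.
split => //; split; first by move=> x y -> ->; rewrite L.
by move=> x ->; rewrite inv1.
Qed.

Lemma ds_triv_S k H : ds k H = [set one] -> ds k.+1 H = [set one].
Proof.
case: hG => A L V.
move=> e /=; rewrite e; apply/seteqP; split.
  apply: gen_min; first exact: sg_triv.
  by move=> _ [x -> [y -> <-]]; rewrite /Defs.commg inv1 !L.
by move=> x ->; apply: sg_one; apply: gen_sg.
Qed.

Lemma ds_triv_le k c H : (k <= c)%N -> ds k H = [set one] -> ds c H = [set one].
Proof.
move=> /subnK <-; elim: (c - k)%N => [|n IH] // e.
have -> : (n.+1 + k = (n + k).+1)%N by []. by apply: ds_triv_S; apply: IH.
Qed.

Definition Ufam (F : set (set T)) : set T := fun x => exists2 K, F K & K x.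

Lemma chain_sg (F : set (set T)) : total_on F subset -> F !=set0 ->
  (forall K, F K -> sg K) -> sg (Ufam F).
Proof.
move=> tot [K0 FK0] hF; split; first by exists K0 => //; apply: sg_one; apply: hF.
split.
  move=> x y [K1 F1 x1] [K2 F2 y2].
  case: (tot _ _ F1 F2) => s.
    by exists K2 => //; case: (hF _ F2) => _ [hm _]; apply: hm => //; apply: s.
  by exists K1 => //; case: (hF _ F1) => _ [hm _]; apply: hm => //; apply: s.
by move=> x [K FK xK]; exists K => //; case: (hF _ FK) => _ [_ hi]; apply: hi.
Qed.

Lemma ds_union (F : set (set T)) k : total_on F subset -> F !=set0 ->
  (forall K, F K -> sg K) ->
  ds k (Ufam F) `<=` Ufam [set ds k K | K in F].
Proof.
move=> tot ne hF; elim: k => [|k IH] /=.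
  by move=> x [K FK xK]; exists K => //; exists K.
apply: gen_min.
  apply: chain_sg.
  - move=> _ _ [K1 F1 <-] [K2 F2 <-].
    case: (tot _ _ F1 F2) => s; [left|right]; exact: (@ds_mono k.+1 _ _ s).
  - by case: ne => K FK; exists (ds k.+1 K); exists K.
  - by move=> _ [K FK <-]; apply: (@ds_sg k.+1); apply: hF.
move=> _ [x /IH [_ [K1 F1 <-] x1] [y /IH [_ [K2 F2 <-] y2] <-]].
case: (tot _ _ F1 F2) => s.
  exists (ds k.+1 K2); first by exists K2.
  by apply: sub_gen; exists x; [apply: (@ds_mono k _ _ s)|exists y].
exists (ds k.+1 K1); first by exists K1.
by apply: sub_gen; exists x => //; exists y => //; apply: (@ds_mono k _ _ s).
Qed.

Lemma chain_solv (F : set (set T)) c : total_on F subset -> F !=set0 ->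
  (forall K, F K -> sg K /\ ds c K = [set one]) ->
  sg (Ufam F) /\ ds c (Ufam F) = [set one].
Proof.
move=> tot ne hF.
have hF' : forall K, F K -> sg K by move=> K /hF [].
have su := chain_sg tot ne hF'.
split => //; apply/seteqP; split.
  move=> x /(@ds_union F c tot ne hF') [_ [K FK <-]].
  by rewrite (hF K FK).2.
by move=> x ->; apply: sg_one; apply: ds_sg.
Qed.

Lemma zorn_gen (Q : set T -> Prop) c
  (hc : forall H : set T, sg H -> solvable_sg mul one inv H ->
          derived_length_le mul one inv H c)
  (hQ : forall F : set (set T), total_on F subset -> F !=set0 ->
          (forall K, F K -> sg K /\ Q K) -> Q (Ufam F))
  H : sg H -> solvable_sg mul one inv H -> Q H ->
  exists M, (sg M /\ solvable_sg mul one inv M /\ Q M) /\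
    (forall K, sg K -> solvable_sg mul one inv K -> Q K -> M `<=` K -> K = M) /\
    H `<=` M.
Proof.
move=> sH solH QH.
pose P X := sg X /\ solvable_sg mul one inv X /\ Q X /\ H `<=` X.
pose R (a b : {X | P X}) := `[< proj1_sig a `<=` proj1_sig b >].
have [t tmax] : exists t, forall s, R t s -> s = t.
  apply: (@Zorn _ R).
  - by move=> a; apply/asboolP.
  - by move=> a b d /asboolP ab /asboolP bd; apply/asboolP => x /ab /bd.
  - move=> [a pa] [b pb] /asboolP ab /asboolP ba; apply: eq_exist.
    by apply/seteqP; split.
  - move=> A totA.
    pose F X := X = H \/ exists2 a, A a & proj1_sig a = X.
    have FP : forall K, F K -> P K.
      by move=> K [->|[a _ <-]]; [split=> //; split=> //; split | exact: proj2_sig a].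
    have totF : total_on F subset.
      move=> X Y [->|[a Aa <-]] [->|[b Ab <-]].
      - by left.
      - by left; case: (proj2_sig b) => _ [_ [_ ?]].
      - by right; case: (proj2_sig a) => _ [_ [_ ?]].
      - by case: (totA _ _ Aa Ab) => /asboolP ?; [left|right].
    have neF : F !=set0 by exists H; left.
    have PU : P (Ufam F).
      have [sU dU] : sg (Ufam F) /\ ds c (Ufam F) = [set one].
        apply: chain_solv => // K /FP [sK [solK _]]; split => //.
        have [k [kc dk]] := hc _ sK solK.
        exact: ds_triv_le kc dk.
      split => //; split; first by exists c.
      split; first by apply: hQ => // K /FP [? [_ [? _]]].
      by move=> x hx; exists H => //; left.
    exists (exist _ (Ufam F) PU) => s As; apply/asboolP => x hx.
    by exists (proj1_sig s) => //; right; exists s.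
exists (proj1_sig t); case: (proj2_sig t) => sM [solM [QM HM]].
split => //; split => // K sK solK QK MK.
have PK : P K by split => //; split => //; split => //; move=> x /HM /MK.
by rewrite -[K]/(proj1_sig (exist _ K PK)) (tmax (exist _ K PK)) //; apply/asboolP.
Qed.

End G.

Theorem proposition3p10 (T : topologicalType)
  (mul : T -> T -> T) (one : T) (inv : T -> T)
  (hG : is_group_law mul one inv) (c : nat) (c_gt0 : (0 < c)%N)
  (hc : forall H : set T, is_subgroup mul one inv H ->
          solvable_sg mul one inv H -> derived_length_le mul one inv H c) :
  (forall H : set T, is_subgroup mul one inv H -> solvable_sg mul one inv H ->
     exists M : set T, maximal_solvable mul one inv M /\ H `<=` M) /\
  (forall H : set T, is_subgroup mul one inv H -> solvable_sg mul one inv H ->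
     connected H ->
     exists M : set T, maximal_connected_solvable mul one inv M /\ H `<=` M).
Proof.
split.
  move=> H sH solH.
  have [M [[sM [solM _]] [mM HM]]] :=
    @zorn_gen _ mul one inv hG (fun _ => True) c hc (fun _ _ _ _ => I) H sH solH I.
  exists M; split => //; split => //; split => //.
  by move=> K sK solK MK; apply: mM.
move=> H sH solH cH.
have [M [[sM [solM cM]] [mM HM]]] :=
  @zorn_gen _ mul one inv hG connected c hc
    (fun F _ _ hF => @bigcup_connected T (set T) id F
       (ex_intro _ one (fun K FK => proj1 (proj1 (hF K FK))))
       (fun K FK => proj2 (hF K FK))) H sH solH cH.
exists M; split => //; split => //; split => //; split => //.
Qed.
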